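(* Let $\mathsf{K}$ be a congruence permutable variety and $\mathbf{B}\in\mathsf{K}$. If some subalgebra $\mathbf{A}\leq\mathbf{B}$ is fully epic in $\mathsf{K}$, then $\mathbf{B}$ is finitely subdirectly irreducible.
   Context: A variety is congruence permutable if $\theta_1\circ\theta_2=\theta_2\circ\theta_1$ for all congruences of every member. An algebra is finitely subdirectly irreducible (FSI) if it is nontrivial and its identity congruence is not the intersection of two congruences both different from the identity. $\mathbf{A}\leq\mathbf{B}$ is epic in $\mathsf{K}$ if for all $\mathbf{C}\in\mathsf{K}$ and homomorphisms $g,h\colon\mathbf{B}\to\mathbf{C}$, $g{\upharpoonright}_A=h{\upharpoonright}_A$ implies $g=h$; it is full in $\mathsf{K}$ if it is proper, almost total ($B=\mathrm{Sg}^{\mathbf{B}}(A\cup\{b\})$ for some $b$), and every congruence $\theta\neq\mathrm{id}_B$ of $\mathbf{B}$ relates each $b\in B$ to some $a\in A$; fully epic means full and epic. *)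

(* Defs.v *)
From mathcomp Require Import ssreflect ssrfun ssrbool eqtype ssrnat fintype.
Set Implicit Arguments. Unset Strict Implicit. Unset Printing Implicit Defensive.

Record signature := Signature { ops :> Type; arity : ops -> nat }.

Section UA.
Variable sg : signature.

Record algebra := Algebra {
  carrier :> Type;
  op : forall f : ops sg, ('I_(arity f) -> carrier) -> carrier }.

Inductive term : Type :=
  | Var : nat -> term
  | App : forall f : ops sg, ('I_(arity f) -> term) -> term.

Fixpoint eval (A : algebra) (v : nat -> A) (t : term) : A :=
  match t with
  | Var n => v n
  | App f args => @op A f (fun i => eval v (args i))
  end.

Definition models (E : term -> term -> Prop) (A : algebra) : Prop :=
  forall s t, E s t -> forall v : nat -> A, eval v s = eval v t.

Definition is_variety (K : algebra -> Prop) : Prop :=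
  exists E : term -> term -> Prop, forall A, K A <-> models E A.

Definition is_congruence (A : algebra) (th : A -> A -> Prop) : Prop :=
  [/\ (forall x, th x x),
      (forall x y, th x y -> th y x),
      (forall x y z, th x y -> th y z -> th x z)
    & (forall f (a b : 'I_(arity f) -> A),
         (forall i, th (a i) (b i)) -> th (@op A f a) (@op A f b))].

Definition rel_comp (T : Type) (r s : T -> T -> Prop) : T -> T -> Prop :=
  fun x z => exists y, r x y /\ s y z.

Definition is_identity_rel (T : Type) (r : T -> T -> Prop) : Prop :=
  forall x y, r x y <-> x = y.

Definition congruence_permutable (K : algebra -> Prop) : Prop :=
  forall A : algebra, K A ->
  forall th1 th2 : A -> A -> Prop, is_congruence th1 -> is_congruence th2 ->
  forall x y, rel_comp th1 th2 x y <-> rel_comp th2 th1 x y.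

Definition FSI (A : algebra) : Prop :=
  (exists x y : A, x <> y) /\
  forall th1 th2 : A -> A -> Prop, is_congruence th1 -> is_congruence th2 ->
    is_identity_rel (fun x y => th1 x y /\ th2 x y) ->
    is_identity_rel th1 \/ is_identity_rel th2.

Definition is_subuniverse (B : algebra) (S : B -> Prop) : Prop :=
  forall f (a : 'I_(arity f) -> B), (forall i, S (a i)) -> S (@op B f a).

Definition is_subalgebra (B : algebra) (S : B -> Prop) : Prop :=
  is_subuniverse S /\ exists x, S x.

Definition Sg (B : algebra) (X : B -> Prop) : B -> Prop :=
  fun x => forall S : B -> Prop, is_subuniverse S -> (forall y, X y -> S y) -> S x.

Definition is_hom (B C : algebra) (h : B -> C) : Prop :=
  forall f (a : 'I_(arity f) -> B), h (@op B f a) = @op C f (fun i => h (a i)).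

Definition epic_in (K : algebra -> Prop) (B : algebra) (A : B -> Prop) : Prop :=
  forall C : algebra, K C -> forall g h : B -> C, is_hom g -> is_hom h ->
    (forall a, A a -> g a = h a) -> forall b, g b = h b.

(* A <= B is full in K (the condition does not depend on K). *)
Definition full_in (K : algebra -> Prop) (B : algebra) (A : B -> Prop) : Prop :=
  [/\ (exists b, ~ A b),
      (exists b, forall x, Sg (fun y => A y \/ y = b) x)
    & (forall th : B -> B -> Prop, is_congruence th -> ~ is_identity_rel th ->
         forall b, exists a, A a /\ th b a)].

Definition fully_epic_in (K : algebra -> Prop) (B : algebra) (A : B -> Prop) :=
  full_in K A /\ epic_in K A.

End UA.

(* Main.v *)
From Stdlib Require Import Classical ClassicalEpsilon FunctionalExtensionality PropExtensionality ProofIrrelevance.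
Require Import Defs.
From mathcomp Require Import ssreflect ssrfun ssrbool eqtype ssrnat fintype.
Set Implicit Arguments. Unset Strict Implicit.

Lemma sig_eq' (T : Type) (P : T -> Prop) (x y : {z | P z}) :
  proj1_sig x = proj1_sig y -> x = y.
Proof. case: x => x px; case: y => y py /= E; subst y; f_equal; apply: proof_irrelevance. Qed.

Section Quot.
Variables (sg : signature) (X : algebra sg) (chi : X -> X -> Prop)
  (Hc : is_congruence chi).

Definition qcar := {P : X -> Prop | exists x, P = chi x}.
Definition cls (x : X) : qcar := exist _ (chi x) (ex_intro _ x erefl).
Definition rep (P : qcar) : X :=
  proj1_sig (constructive_indefinite_description _ (proj2_sig P)).
Lemma rep_spec P : proj1_sig P = chi (rep P).
Proof. rewrite /rep; case: (constructive_indefinite_description _ _) => //. Qed.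

Lemma cls_eq x y : chi x y -> cls x = cls y.
Proof.
case: Hc => R S T _ H; apply: sig_eq' => /=.
apply: functional_extensionality => z; apply: propositional_extensionality.
split=> [H1|H1]; [apply: T (S _ _ H) H1 | apply: T H H1].
Qed.

Lemma cls_inv x y : cls x = cls y -> chi x y.
Proof.
case: Hc => R _ _ _ H. have := f_equal (@proj1_sig _ _) H => /= ->. exact: R.
Qed.

Lemma cls_rep P : cls (rep P) = P.
Proof. apply: sig_eq' => /=; by rewrite -rep_spec. Qed.

Lemma rep_cls x : chi (rep (cls x)) x.
Proof. apply: cls_inv; by rewrite cls_rep. Qed.

Definition qop f (a : 'I_(arity f) -> qcar) : qcar := cls (op (fun i => rep (a i))).
Definition Quot := @Algebra sg qcar qop.

Lemma eval_quot (v : nat -> Quot) t :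
  eval v t = cls (eval (fun n => rep (v n)) t).
Proof.
elim: t => [n|f args IH] /=; first by rewrite cls_rep.
rewrite /qop; apply: cls_eq; case: Hc => _ _ _ C; apply: C => i.
rewrite IH; exact: rep_cls.
Qed.

Lemma models_quot E : models E X -> models E Quot.
Proof. move=> M s t Est v; rewrite !eval_quot; congr cls; exact: M. Qed.
End Quot.

Section Sub.
Variables (sg : signature) (B : algebra sg) (A : B -> Prop) (HA : is_subuniverse A).
Definition scar := {x : B | A x}.
Definition sop f (a : 'I_(arity f) -> scar) : scar :=
  exist _ (op (fun i => proj1_sig (a i))) (HA (fun i => proj2_sig (a i))).
Definition SubA := @Algebra sg scar sop.
Lemma eval_sub (v : nat -> SubA) t :
  proj1_sig (eval v t) = eval (fun n => proj1_sig (v n)) t.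
Proof.
elim: t => [n|f args IH] //=; congr op; apply: functional_extensionality => i; exact: IH.
Qed.
Lemma models_sub E : models E B -> models E SubA.
Proof. move=> M s t Est v; apply: sig_eq'; rewrite !eval_sub; exact: M. Qed.
End Sub.

Theorem mainTheorem12 (sg : signature) (K : algebra sg -> Prop)
  (HK : is_variety K) (Hcp : congruence_permutable K)
  (B : algebra sg) (HB : K B) (A : B -> Prop) (HA : is_subalgebra A)
  (Hfe : fully_epic_in K A) :
  FSI B.
Proof.
case: HA => HAs [a0 Ha0].
case: Hfe => [[[b0 Hb0] _ Hfull] Hep].
case: HK => E HE.
have KS : K (SubA HAs) by apply/HE; apply: models_sub; apply/HE.
split; first by exists b0, a0 => e; apply: Hb0; rewrite e.
move=> th1 th2 C1 C2 Hid.
case: (classic (is_identity_rel th1)) => N1; first by left.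
case: (classic (is_identity_rel th2)) => N2; first by right.
exfalso.
pose S := SubA HAs.
pose t1 := fun x y : S => th1 (proj1_sig x) (proj1_sig y).
pose t2 := fun x y : S => th2 (proj1_sig x) (proj1_sig y).
have Ct1 : is_congruence t1.
  case: C1 => R Sy T Co; split; rewrite /t1.
  - by move=> x; apply: R.
  - by move=> x y; apply: Sy.
  - by move=> x y z; apply: T.
  - by move=> f a b H /=; apply: Co.
have Ct2 : is_congruence t2.
  case: C2 => R Sy T Co; split; rewrite /t2.
  - by move=> x; apply: R.
  - by move=> x y; apply: Sy.
  - by move=> x y z; apply: T.
  - by move=> f a b H /=; apply: Co.
have P := Hcp S KS t1 t2 Ct1 Ct2.
pose chi := rel_comp t1 t2.
have Cchi : is_congruence chi.
  have [R1 S1 T1 Co1] := Ct1; have [R2 S2 T2 Co2] := Ct2.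
  split.
  - by move=> x; exists x; split.
  - move=> x y [z [H1 H2]]; apply/P; exists z; split; [exact: S2|exact: S1].
  - move=> x y w [z1 [H1 H2]] [z2 [H3 H4]].
    have [u [U1 U2]] : rel_comp t1 t2 z1 z2 by apply/P; exists y.
    exists u; split; [exact: T1 H1 U1 | exact: T2 U2 H4].
  - move=> f a b H.
    pose z i := proj1_sig (constructive_indefinite_description _ (H i)).
    have Hz i : t1 (a i) (z i) /\ t2 (z i) (b i)
      := proj2_sig (constructive_indefinite_description _ (H i)).
    exists (op z); split; [apply: Co1 => i; exact: (Hz i).1 | apply: Co2 => i; exact: (Hz i).2].
have KC : K (@Quot _ S chi) by apply (proj2 (HE _)); apply: (models_quot Cchi); apply (proj1 (HE _)).
have F1 : forall x, exists a, A a /\ th1 x a by apply: Hfull.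
have F2 : forall x, exists a, A a /\ th2 x a by apply: Hfull.
pose r1 x := constructive_indefinite_description _ (F1 x).
pose r2 x := constructive_indefinite_description _ (F2 x).
pose s1 x : S := exist _ (proj1_sig (r1 x)) (proj2_sig (r1 x)).1.
pose s2 x : S := exist _ (proj1_sig (r2 x)) (proj2_sig (r2 x)).1.
have hs1 x : th1 x (proj1_sig (s1 x)) := (proj2_sig (r1 x)).2.
have hs2 x : th2 x (proj1_sig (s2 x)) := (proj2_sig (r2 x)).2.
pose g x : @Quot _ S chi := cls chi (s1 x).
pose h x : @Quot _ S chi := cls chi (s2 x).
have [R1 S1 T1 Co1] := C1; have [R2 S2 T2 Co2] := C2.
have [Rc Sc Tc Coc] := Cchi.
have homg : is_hom g.
  move=> f a; rewrite /g /= /qop; apply: cls_eq => //.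
  apply: (Tc _ (sop HAs (fun i => s1 (a i)))).
    exists (sop HAs (fun i => s1 (a i))); split; last by apply: R2.
    rewrite /t1 /=; apply: T1 (S1 _ _ (hs1 _)) _; apply: Co1 => i; exact: hs1.
  apply: Coc => i; apply: Sc; exact: rep_cls.
have homh : is_hom h.
  move=> f a; rewrite /h /= /qop; apply: cls_eq => //.
  apply: (Tc _ (sop HAs (fun i => s2 (a i)))).
    exists (s2 (op a)); split; first by apply: R1.
    rewrite /t2 /=; apply: T2 (S2 _ _ (hs2 _)) _; apply: Co2 => i; exact: hs2.
  apply: Coc => i; apply: Sc; exact: rep_cls.
have agree : forall a, A a -> g a = h a.
  move=> a Ha; rewrite /g /h; apply: cls_eq => //.
  exists (exist _ a Ha); split; rewrite /t1 /t2 /=; [exact: S1 | exact: hs2].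
have := Hep _ KC g h homg homh agree b0.
rewrite /g /h => /(cls_inv Cchi) [z [H1 H2]].
move: H1 H2; rewrite /t1 /t2 => H1 H2.
have e : b0 = proj1_sig z.
  apply/Hid; split; first exact: T1 (hs1 _) H1.
  exact: T2 (hs2 _) (S2 _ _ H2).
by apply: Hb0; rewrite e; exact: proj2_sig z.
Qed.
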